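(* (a) Let $B^L$ be a segment of the left boundary of $S_{slit}$ (oriented either way), and suppose $K_1$ extends continuously to $B^L$ with $K_1(z_1)\in e^{-i\pi/4}\mathbb R$ for all $z_1\in B^L$. Then for every $z_2\in S_{slit}$, $$\int_{B^L}\big(\mathcal K^{\circ\circ}_{K_1,K_2}(z_1,z_2)\,dz_1+\mathcal K^{\bullet\circ}_{K_1,K_2}(z_1,z_2)\,d\bar z_1\big)=0,\qquad\int_{B^L}\big(\mathcal K^{\circ\bullet}_{K_1,K_2}(z_1,z_2)\,dz_1+\mathcal K^{\bullet\bullet}_{K_1,K_2}(z_1,z_2)\,d\bar z_1\big)=0.$$ (b) Let $B^R$ be a segment of the right boundary of $S_{slit}$, and suppose $K_1$ extends continuously to $B^R$ with $K_1(z_1)\in e^{i\pi/4}\mathbb R$ for all $z_1\in B^R$. Then for every $z_2\in S_{slit}$ the same two integrals over $B^R$ vanish.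
   Context: $S=\{z\in\mathbb C:-\frac12<\mathrm{Re}\,z<\frac12\}$ and $S_{slit}=S\setminus\{iy:y\le0\}$. Each point $iy$, $y<0$, of the slit gives two prime ends $0^-+iy$ (seen from $\mathrm{Re}\,z<0$) and $0^++iy$ (seen from $\mathrm{Re}\,z>0$). The left boundary of $S_{slit}$ is $\{-\frac12+iy:y\in\mathbb R\}\cup\{0^++iy:y<0\}$ and the right boundary is $\{\frac12+iy:y\in\mathbb R\}\cup\{0^-+iy:y<0\}$. $\varphi:S_{slit}\to\mathbb H$ is the conformal map onto the upper half-plane sending the top extremity ($\mathrm{Im}\,z\to+\infty$) to $\infty$, the bottom-left extremity to $-\frac12$ and the bottom-right extremity to $+\frac12$ (explicitly $\varphi(z)=\frac12\sqrt{1-e^{-2\pi iz}}$ for a suitable branch); it extends analytically to the boundary arcs. Fix a continuous branch of $\sqrt{\varphi'}$. For functions $K_1,K_2$ defined at $z_1,z_2$ respectively (bars denote complex conjugation): $\mathcal K^{\circ\circ}_{K_1,K_2}(z_1,z_2)=\frac{K_1(z_1)\sqrt{\varphi'(z_1)}\,K_2(z_2)\sqrt{\varphi'(z_2)}}{\varphi(z_1)-\varphi(z_2)}$, $\mathcal K^{\circ\bullet}_{K_1,K_2}=\frac{K_1(z_1)\sqrt{\varphi'(z_1)}\,\overline{K_2(z_2)\sqrt{\varphi'(z_2)}}}{\varphi(z_1)-\overline{\varphi(z_2)}}$, $\mathcal K^{\bullet\circ}_{K_1,K_2}=\frac{\overline{K_1(z_1)\sqrt{\varphi'(z_1)}}\,K_2(z_2)\sqrt{\varphi'(z_2)}}{\overline{\varphi(z_1)}-\varphi(z_2)}$,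 $\mathcal K^{\bullet\bullet}_{K_1,K_2}=\frac{\overline{K_1(z_1)\sqrt{\varphi'(z_1)}}\,\overline{K_2(z_2)\sqrt{\varphi'(z_2)}}}{\overline{\varphi(z_1)}-\overline{\varphi(z_2)}}$. *)

(* Defs.v *)
From Stdlib Require Import Reals.
From Coquelicot Require Import Coquelicot.
Open Scope R_scope.

Definition cexp (z : C) : C :=
  (exp (Re z) * cos (Im z), exp (Re z) * sin (Im z)).

(* principal square root: cut along (-oo,0], values with Re >= 0
   (for z on the cut, value i*sqrt|z|) *)
Definition csqrt (z : C) : C :=
  (sqrt ((Cmod z + Re z) / 2),
   (if Rle_dec 0 (Im z) then 1 else -1) * sqrt ((Cmod z - Re z) / 2)).

Definition Ci : C := (0, 1).

Definition S_slit (z : C) : Prop :=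
  -1/2 < Re z < 1/2 /\ ~ (Re z = 0 /\ Im z <= 0).

(* phi(z) = 1/2 sqrt(1 - e^{-2 pi i z}) with the branch valued in the upper
   half-plane, i.e. sqrt_H(w) = i * sqrt_principal(-w). *)
Definition phi (z : C) : C :=
  Cmult (Cmult Ci (/2, 0)) (csqrt (Cminus (cexp (Cmult (0, -2 * PI) z)) 1)).

(* the four kernels, written in terms of a_j = K_j(z_j) sqrt(phi'(z_j)) and
   p_j = phi(z_j) *)
Definition Koo (a1 p1 a2 p2 : C) : C := Cdiv (Cmult a1 a2) (Cminus p1 p2).
Definition Kob (a1 p1 a2 p2 : C) : C :=
  Cdiv (Cmult a1 (Cconj a2)) (Cminus p1 (Cconj p2)).
Definition Kbo (a1 p1 a2 p2 : C) : C :=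
  Cdiv (Cmult (Cconj a1) a2) (Cminus (Cconj p1) p2).
Definition Kbb (a1 p1 a2 p2 : C) : C :=
  Cdiv (Cmult (Cconj a1) (Cconj a2)) (Cminus (Cconj p1) (Cconj p2)).

Definition in_seg (a b y : R) : Prop := Rmin a b <= y <= Rmax a b.

(* The closed vertical segment { x0 + i y : y between a and b } is a segment of
   the LEFT boundary of S_slit: either on the line Re z = -1/2, or on the slit
   side 0^+ (points i y, y < 0, seen from Re z > 0). *)
Definition left_boundary_seg (x0 a b : R) : Prop :=
  x0 = -1/2 \/ (x0 = 0 /\ a < 0 /\ b < 0).
(* RIGHT boundary: the line Re z = 1/2, or the slit side 0^- (seen from Re z < 0). *)
Definition right_boundary_seg (x0 a b : R) : Prop :=
  x0 = 1/2 \/ (x0 = 0 /\ a < 0 /\ b < 0).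

(* Points of S_slit near the left (resp. right) boundary point x0 + i y are
   those with Re z > x0 (resp. Re z < x0). *)
Definition side_left (x0 : R) (z : C) : Prop := S_slit z /\ x0 < Re z.
Definition side_right (x0 : R) (z : C) : Prop := S_slit z /\ Re z < x0.

(* [fB] gives the values of the continuous extension of [f] (defined on S_slit)
   to the boundary segment {x0 + i y : y in seg a b}, the boundary points being
   approached from the side [D]: f(z) -> fB y as z -> x0 + i y within D, and the
   extended function is continuous along the segment. *)
Definition cont_ext (D : C -> Prop) (f : C -> C) (fB : R -> C) (x0 a b : R) : Prop :=
  forall y, in_seg a b y ->
    filterlim f (within D (locally ((x0, y) : C))) (locally (fB y)) /\
    filterlim fB (within (in_seg a b) (locally y)) (locally (fB y)).

Definition on_line (theta : R) (c : C) : Prop :=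
  exists t : R, c = Cmult (RtoC t) (cexp (0, theta)).

Definition sqrt_dphi_branch (dphi s : C -> C) : Prop :=
  (forall z, S_slit z -> @is_derive C_AbsRing C_NormedModule phi z (dphi z)) /\
  (forall z, S_slit z -> Cmult (s z) (s z) = dphi z) /\
  (forall z, S_slit z -> filterlim s (within S_slit (locally z)) (locally (s z))).

(* The integrands of the two integrals, along z1 = x0 + i y:
   dz1 = i dy, d(conj z1) = -i dy. Here a1 = K1(z1) sqrt(phi'(z1)), p1 = phi(z1)
   (boundary values), a2 = K2(z2) sqrt(phi'(z2)), p2 = phi(z2). *)
Definition integrand1 (a1 p1 a2 p2 : C) : C :=
  Cplus (Cmult (Koo a1 p1 a2 p2) Ci) (Cmult (Kbo a1 p1 a2 p2) (Copp Ci)).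
Definition integrand2 (a1 p1 a2 p2 : C) : C :=
  Cplus (Cmult (Kob a1 p1 a2 p2) Ci) (Cmult (Kbb a1 p1 a2 p2) (Copp Ci)).

(* Main.v *)
From Stdlib Require Import Reals Lra.
From Coquelicot Require Import Coquelicot.
Require Import Defs.
Open Scope R_scope.
Section Lims.
Context {T : Type} (F : (T -> Prop) -> Prop) {FF : Filter F}.
Lemma LM (f g : T -> R) a b : filterlim f F (locally a) -> filterlim g F (locally b) ->
  filterlim (fun z => f z * g z) F (locally (a * b)).
Proof. intros Hf Hg. apply (filterlim_comp_2 f g Rmult Hf Hg (@filterlim_mult R_AbsRing a b)). Qed.
Lemma LP (f g : T -> R) a b : filterlim f F (locally a) -> filterlim g F (locally b) ->
  filterlim (fun z => f z + g z) F (locally (a + b)).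
Proof. intros Hf Hg. apply (filterlim_comp_2 f g Rplus Hf Hg (@filterlim_plus R_AbsRing R_NormedModule a b)). Qed.
Lemma LO (f : T -> R) a : filterlim f F (locally a) ->
  filterlim (fun z => - f z) F (locally (- a)).
Proof. intros Hf. apply (filterlim_comp _ _ _ f Ropp F _ _ Hf (@filterlim_opp R_AbsRing R_NormedModule a)). Qed.
Lemma LMi (f g : T -> R) a b : filterlim f F (locally a) -> filterlim g F (locally b) ->
  filterlim (fun z => f z - g z) F (locally (a - b)).
Proof. intros Hf Hg. unfold Rminus. apply LP; auto. apply LO; auto. Qed.
Lemma LK (a : R) : filterlim (fun _ => a) F (locally a).
Proof. apply filterlim_const. Qed.
Lemma LPow2 (f : T -> R) a : filterlim f F (locally a) -> filterlim (fun z => f z ^ 2) F (locally (a ^ 2)).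
Proof. intros Hf. simpl. apply LM; auto. apply LM; auto. apply LK. Qed.
Lemma Lcomp (f : T -> R) (h : R -> R) a : filterlim f F (locally a) -> continuous h a ->
  filterlim (fun z => h (f z)) F (locally (h a)).
Proof. intros Hf Hh. exact (filterlim_comp _ _ _ f h F _ _ Hf Hh). Qed.
Lemma Lfst (f : T -> C) (l : C) : filterlim f F (locally l) -> filterlim (fun z => fst (f z)) F (locally (fst l)).
Proof.
  intros Hf. apply (filterlim_comp _ _ _ f fst F _ _ Hf).
  intros P [e He]. exists e. intros w [Hw1 Hw2]. apply He. exact Hw1.
Qed.
Lemma Lsnd (f : T -> C) (l : C) : filterlim f F (locally l) -> filterlim (fun z => snd (f z)) F (locally (snd l)).
Proof.
  intros Hf. apply (filterlim_comp _ _ _ f snd F _ _ Hf).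
  intros P [e He]. exists e. intros w [Hw1 Hw2]. apply He. exact Hw2.
Qed.
Lemma Leq (f g : T -> R) a b : ProperFilter' F -> F (fun z => f z = g z) ->
  filterlim f F (locally a) -> filterlim g F (locally b) -> a = b.
Proof.
  intros HP He Hf Hg. apply (filterlim_ext_loc f g He) in Hf.
  exact (@filterlim_locally_unique T R_AbsRing R_NormedModule F HP g a b Hf Hg).
Qed.
Lemma Lle (f : T -> R) a b : ProperFilter' F -> F (fun z => f z <= b) ->
  filterlim f F (locally a) -> a <= b.
Proof.
  intros HP He Hf. 
  pose proof (@filterlim_le T F HP f (fun _ => b) (Finite a) (Finite b) He Hf (LK b)). exact H.
Qed.
Lemma Lge (f : T -> R) a b : ProperFilter' F -> F (fun z => b <= f z) ->
  filterlim f F (locally a) -> b <= a.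
Proof.
  intros HP He Hf. 
  pose proof (@filterlim_le T F HP (fun _ => b) f (Finite b) (Finite a) He (LK b) Hf). exact H.
Qed.
End Lims.
Lemma csqrt_sq (w : C) : fst (csqrt w) ^ 2 - snd (csqrt w) ^ 2 = fst w /\
   2 * fst (csqrt w) * snd (csqrt w) = snd w.
Proof.
  destruct w as [a b]. unfold csqrt. simpl fst; simpl snd.
  pose proof (re_le_Cmod (a,b)) as H1. simpl in H1.
  assert (Hm : Cmod (a,b) ^ 2 = a^2 + b^2).
  { unfold Cmod. cbn [fst snd]. rewrite <- Rsqr_pow2, Rsqr_sqrt; [ring| nra]. }
  assert (HA : 0 <= (Cmod (a, b) + a) / 2) by (pose proof (Rle_abs (-a)) as H2; rewrite Rabs_Ropp in H2; lra).
  assert (HB : 0 <= (Cmod (a, b) - a) / 2) by (pose proof (Rle_abs a); lra).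
  split.
  - rewrite <- !Rsqr_pow2. rewrite Rsqr_mult, !Rsqr_sqrt by assumption.
    destruct (Rle_dec 0 b); unfold Rsqr; lra.
  - replace (2 * sqrt ((Cmod (a, b) + a) / 2) *
      ((if Rle_dec 0 b then 1 else -1) * sqrt ((Cmod (a, b) - a) / 2)))
     with (2 * (if Rle_dec 0 b then 1 else -1) * sqrt ((Cmod (a, b) + a) / 2 * ((Cmod (a, b) - a) / 2))) by (rewrite sqrt_mult by assumption; ring).
    replace ((Cmod (a, b) + a) / 2 * ((Cmod (a, b) - a) / 2)) with (Rsqr (b/2)) by (unfold Rsqr; nra).
    rewrite sqrt_Rsqr_abs.
    destruct (Rle_dec 0 b).
    + rewrite Rabs_right by lra. field.
    + rewrite Rabs_left by lra. field.
Qed.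
Definition E1 (x y : R) := exp (2*PI*y) * cos (2*PI*x).
Definition E2 (x y : R) := - (exp (2*PI*y) * sin (2*PI*x)).
Definition Wf (x y : R) : C := Cminus (cexp (Cmult (0,-2*PI) (x,y))) 1.
Lemma W_parts x y : fst (Wf x y) = E1 x y - 1 /\ snd (Wf x y) = E2 x y.
Proof.
  unfold Wf, E1, E2, cexp, Cminus, Cmult, Cplus, Copp, RtoC, Re, Im; cbn [fst snd].
  replace (0 * x - -2 * PI * y) with (2*PI*y) by ring.
  replace (0 * y + -2 * PI * x) with (-(2*PI*x)) by ring.
  rewrite cos_neg, sin_neg. split; ring.
Qed.
Lemma phi_parts x y : fst (phi (x,y)) = - snd (csqrt (Wf x y)) / 2 /\
   snd (phi (x,y)) = fst (csqrt (Wf x y)) / 2.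
Proof.
  unfold phi, Wf. destruct (csqrt _) as [a b]. unfold Cmult, Ci; cbn [fst snd]. split; field.
Qed.
Lemma phi_sq x y : fst (phi (x,y)) ^ 2 - snd (phi (x,y)) ^ 2 = (1 - E1 x y)/4 /\
  2 * fst (phi (x,y)) * snd (phi (x,y)) = - E2 x y / 4.
Proof.
  destruct (phi_parts x y) as [H1 H2]. rewrite H1, H2.
  destruct (csqrt_sq (Wf x y)) as [H3 H4]. destruct (W_parts x y) as [H5 H6].
  split; nra.
Qed.
Lemma phi_re_sign x y : (0 <= E2 x y -> fst (phi (x,y)) <= 0) /\ (E2 x y < 0 -> 0 <= fst (phi (x,y))).
Proof.
  destruct (phi_parts x y) as [H1 _]. rewrite H1. destruct (W_parts x y) as [_ H6].
  unfold csqrt, Re, Im. cbn [snd]. rewrite H6.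
  pose proof (sqrt_pos ((Cmod (Wf x y) - fst (Wf x y)) / 2)).
  split; intro; destruct (Rle_dec 0 (E2 x y)); lra.
Qed.

Lemma Cmod_r0 (a : R) : Cmod (a, 0) = Rabs a.
Proof. unfold Cmod; simpl. rewrite <- sqrt_Rsqr_abs. f_equal. unfold Rsqr; ring. Qed.
Lemma im_le_Cmod (c : C) : Rabs (snd c) <= Cmod c.
Proof. pose proof (Rmax_Cmod c). eapply Rle_trans; [|exact H]. apply Rmax_r. Qed.
Lemma L1 (f : C -> C) (x y : R) (D : C) :
  @is_derive C_AbsRing C_NormedModule f (x,y) D ->
  is_derive (fun t => fst (f (t,y))) x (fst D) /\ is_derive (fun t => snd (f (t,y))) x (snd D).
Proof.
  intros [_ H]. specialize (H (x,y) (fun P HP => HP)).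
  unfold is_domin in H.
  split; apply is_derive_Reals; intros eps Heps;
  destruct (H (mkposreal (eps/2) ltac:(lra))) as [d Hd];
  exists d; intros h Hh0 Hh; simpl in Hd.
  all: cbv beta; destruct (f (x + h, y)) as [a1 b1] eqn:E1; destruct (f (x, y)) as [a0 b0] eqn:E0.
  all: specialize (Hd (x+h, y)).
  all: assert (Ed : (((x + h)%R, y) + - (x, y))%C = (h, 0)) by
     (unfold Cplus, Copp; simpl; f_equal; ring).
  all: assert (Hb : @ball (AbsRing_UniformSpace C_AbsRing) (x,y) d (x+h,y)) by
     (unfold ball; simpl; unfold AbsRing_ball, abs, minus, plus, opp; simpl; rewrite Ed, Cmod_r0; exact Hh).
  all: specialize (Hd Hb); unfold minus, plus, opp, scal, norm in Hd; simpl in Hd.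
  all: change abs with Cmod in Hd; change mult with Cmult in Hd; rewrite Ed, Cmod_r0 in Hd.
  all: rewrite ?E1 in Hd.
  all: destruct D as [p q].
  all: [> pose proof (re_le_Cmod ((a1,b1) + - (a0,b0) + - Cmult (h, 0) (p, q))%C) as Hc
       | pose proof (im_le_Cmod ((a1,b1) + - (a0,b0) + - Cmult (h, 0) (p, q))%C) as Hc].
  all: simpl in *. all: rewrite ?E1, ?E0; simpl.
  all: assert (Hh1 : 0 < Rabs h) by (apply Rabs_pos_lt; exact Hh0).
  all: [> replace ((a1 - a0) / h - p) with ((a1 + - a0 + - (h * p - 0 * q)) / h) by (field; exact Hh0)
       | replace ((b1 - b0) / h - q) with ((b1 + - b0 + - (h * q + 0 * p)) / h) by (field; exact Hh0)].
  all: rewrite Rabs_div by exact Hh0.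
  all: apply Rlt_div_l; [exact Hh1|].
  all: eapply Rle_lt_trans; [eapply Rle_trans; [exact Hc | exact Hd] |].
  all: nra.
Qed.

Lemma deriv_alg (fr fi : R -> R) x y p q :
  is_derive fr x p -> is_derive fi x q ->
  (forall t, fr t * fr t - fi t * fi t = (1 - E1 t y)/4) ->
  (forall t, 2 * fr t * fi t = - E2 t y / 4) ->
  p * fr x - q * fi x = PI/4 * exp (2*PI*y) * sin (2*PI*x) /\
  p * fi x + q * fr x = PI/4 * exp (2*PI*y) * cos (2*PI*x).
Proof.
  intros Hr Hi H1 H2.
  pose proof (is_derive_mult fr fr x _ _ Hr Hr Rmult_comm) as Hrr.
  pose proof (is_derive_mult fi fi x _ _ Hi Hi Rmult_comm) as Hii.
  pose proof (is_derive_mult fr fi x _ _ Hr Hi Rmult_comm) as Hri.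
  pose proof (is_derive_minus _ _ x _ _ Hrr Hii) as Hd1.
  apply (is_derive_ext _ (fun t => (1 - E1 t y)/4)) in Hd1;
   [| intro t; rewrite <- H1; reflexivity].
  apply (is_derive_scal _ _ 2) in Hri.
  apply (is_derive_ext _ (fun t => - E2 t y / 4)) in Hri;
   [| intro t; rewrite <- H2; rewrite Rmult_assoc; reflexivity].
  assert (K1 : is_derive (fun t => (1 - E1 t y)/4) x (PI/2 * exp (2*PI*y) * sin (2*PI*x)))
    by (unfold E1; auto_derive; [exact I | field]).
  assert (K2 : is_derive (fun t => - E2 t y / 4) x (PI/2 * exp (2*PI*y) * cos (2*PI*x)))
    by (unfold E2; auto_derive; [exact I | field]).
  apply is_derive_unique in Hd1, Hri, K1, K2.
  rewrite Hd1 in K1. rewrite Hri in K2.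
  unfold minus, plus, opp, mult in K1, K2; simpl in K1, K2.
  split; lra.
Qed.

Lemma deriv_rel x y D : @is_derive C_AbsRing C_NormedModule phi (x,y) D ->
  fst D * fst (phi (x,y)) - snd D * snd (phi (x,y)) = PI/4 * exp (2*PI*y) * sin (2*PI*x) /\
  fst D * snd (phi (x,y)) + snd D * fst (phi (x,y)) = PI/4 * exp (2*PI*y) * cos (2*PI*x).
Proof.
  intro H. destruct (L1 phi x y D H) as [Hr Hi].
  apply (deriv_alg (fun t => fst (phi (t,y))) (fun t => snd (phi (t,y))) x y); auto.
  - intro t. destruct (phi_sq t y) as [A _]. rewrite <- A. ring.
  - intro t. destruct (phi_sq t y) as [_ A]. exact A.
Qed.

Ltac lim := match goal with
 | |- filterlim (fun _ => ?c) _ _ => apply LK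
 | |- filterlim (fun z => _ - _) _ _ => apply LMi; lim
 | |- filterlim (fun z => _ + _) _ _ => apply LP; lim
 | |- filterlim (fun z => _ * _) _ _ => apply LM; lim
 | |- filterlim (fun z => - _) _ _ => apply LO; lim
 | |- filterlim (fun z => _ ^ 2) _ _ => apply LPow2; lim
 | _ => assumption
 end.

Lemma core (dphi s : C -> C) (D : C -> Prop) x0 y (sB phiB : C) :
  sqrt_dphi_branch dphi s ->
  ProperFilter' (within D (locally ((x0,y):C))) ->
  (forall z, D z -> S_slit z) ->
  filterlim s (within D (locally ((x0,y):C))) (locally sB) ->
  filterlim phi (within D (locally ((x0,y):C))) (locally phiB) ->
  fst phiB ^ 2 - snd phiB ^ 2 = (1 - E1 x0 y)/4 /\
  2 * fst phiB * snd phiB = - E2 x0 y / 4 /\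
  (fst sB ^2 - snd sB ^2) * fst phiB - (2 * fst sB * snd sB) * snd phiB = PI/4 * exp (2*PI*y) * sin (2*PI*x0) /\
  (fst sB ^2 - snd sB ^2) * snd phiB + (2 * fst sB * snd sB) * fst phiB = PI/4 * exp (2*PI*y) * cos (2*PI*x0).
Proof.
  intros [Hder [Hsq _]] HP HD Hs Hphi.
  set (F := within D (locally ((x0,y):C))) in *.
  assert (FF : Filter F) by (apply within_filter; apply locally_filter).
  assert (Hid : filterlim (fun z : C => z) F (locally ((x0,y):C))).
  { intros Q HQ. unfold F, within, filtermap. apply filter_imp with Q; [intros; assumption | exact HQ]. }
  pose proof (Lfst F _ _ Hid) as Hx. pose proof (Lsnd F _ _ Hid) as Hy. simpl in Hx, Hy.
  assert (Hexp : filterlim (fun z : C => exp (2*PI*snd z)) F (locally (exp (2*PI*y)))).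
  { apply (Lcomp F (fun z : C => snd z) (fun t => exp (2*PI*t))); auto.
    apply (@ex_derive_continuous R_AbsRing R_NormedModule). auto_derive. exact I. }
  assert (Hsin : filterlim (fun z : C => sin (2*PI*fst z)) F (locally (sin (2*PI*x0)))).
  { apply (Lcomp F (fun z : C => fst z) (fun t => sin (2*PI*t))); auto.
    apply (@ex_derive_continuous R_AbsRing R_NormedModule). auto_derive. exact I. }
  assert (Hcos : filterlim (fun z : C => cos (2*PI*fst z)) F (locally (cos (2*PI*x0)))).
  { apply (Lcomp F (fun z : C => fst z) (fun t => cos (2*PI*t))); auto.
    apply (@ex_derive_continuous R_AbsRing R_NormedModule). auto_derive. exact I. }
  pose proof (Lfst F _ _ Hs) as Hs1. pose proof (Lsnd F _ _ Hs) as Hs2.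
  pose proof (Lfst F _ _ Hphi) as Hp1. pose proof (Lsnd F _ _ Hphi) as Hp2.
  split; [|split; [|split]].
  1: { assert (Ev : F (fun z => fst (phi z) ^ 2 - snd (phi z) ^ 2 = (1 - E1 (fst z) (snd z))/4)).
    { unfold F, within. apply filter_forall. intros [a b] _. apply phi_sq. all: try exact FF. }
    assert (Lf : filterlim (fun z => fst (phi z) ^ 2 - snd (phi z) ^ 2) F (locally (fst phiB ^ 2 - snd phiB ^ 2))).
    { lim. all: try exact FF. }
    assert (Lg : filterlim (fun z => (1 - E1 (fst z) (snd z))/4) F (locally ((1 - E1 x0 y)/4))).
    { unfold E1, Rdiv. lim. all: try exact FF. }
    exact (@Leq C F FF (fun z => fst (phi z) ^ 2 - snd (phi z) ^ 2) (fun z => (1 - E1 (fst z) (snd z))/4) _ _ HP Ev Lf Lg). }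
  1: { assert (Ev : F (fun z => 2 * fst (phi z) * snd (phi z) = - E2 (fst z) (snd z) / 4)).
    { unfold F, within. apply filter_forall. intros [a b] _. apply phi_sq. all: try exact FF. }
    assert (Lf : filterlim (fun z => 2 * fst (phi z) * snd (phi z)) F (locally (2 * fst phiB * snd phiB))).
    { lim. all: try exact FF. }
    assert (Lg : filterlim (fun z => - E2 (fst z) (snd z) / 4) F (locally (- E2 x0 y / 4))).
    { unfold E2, Rdiv. lim. all: try exact FF. }
    exact (@Leq C F FF (fun z => 2 * fst (phi z) * snd (phi z)) (fun z => - E2 (fst z) (snd z) / 4) _ _ HP Ev Lf Lg). }
  1: { assert (Ev : F (fun z => (fst (s z) ^2 - snd (s z) ^2) * fst (phi z) - (2 * fst (s z) * snd (s z)) * snd (phi z) = PI/4 * exp (2*PI*snd z) * sin (2*PI*fst z))).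
    { unfold F, within. apply filter_forall. intros [a b] Hz. apply HD in Hz.
      pose proof (Hder _ Hz) as Hd. rewrite <- (Hsq _ Hz) in Hd. apply deriv_rel in Hd.
      destruct Hd as [Hd _]. cbn [fst snd]. destruct (s (a,b)) as [p q]. simpl in Hd |- *.
      rewrite <- Hd. ring. all: try exact FF. }
    assert (Lf : filterlim (fun z => (fst (s z) ^2 - snd (s z) ^2) * fst (phi z) - (2 * fst (s z) * snd (s z)) * snd (phi z)) F (locally ((fst sB ^2 - snd sB ^2) * fst phiB - (2 * fst sB * snd sB) * snd phiB))).
    { lim. all: try exact FF. }
    assert (Lg : filterlim (fun z => PI/4 * exp (2*PI*snd z) * sin (2*PI*fst z)) F (locally (PI/4 * exp (2*PI*y) * sin (2*PI*x0)))).
    { unfold Rdiv. lim. all: try exact FF. }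
    exact (@Leq C F FF (fun z => (fst (s z) ^2 - snd (s z) ^2) * fst (phi z) - (2 * fst (s z) * snd (s z)) * snd (phi z)) (fun z => PI/4 * exp (2*PI*snd z) * sin (2*PI*fst z)) _ _ HP Ev Lf Lg). }
  1: { assert (Ev : F (fun z => (fst (s z) ^2 - snd (s z) ^2) * snd (phi z) + (2 * fst (s z) * snd (s z)) * fst (phi z) = PI/4 * exp (2*PI*snd z) * cos (2*PI*fst z))).
    { unfold F, within. apply filter_forall. intros [a b] Hz. apply HD in Hz.
      pose proof (Hder _ Hz) as Hd. rewrite <- (Hsq _ Hz) in Hd. apply deriv_rel in Hd.
      destruct Hd as [_ Hd]. cbn [fst snd]. destruct (s (a,b)) as [p q]. simpl in Hd |- *.
      rewrite <- Hd. ring. all: try exact FF. }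
    assert (Lf : filterlim (fun z => (fst (s z) ^2 - snd (s z) ^2) * snd (phi z) + (2 * fst (s z) * snd (s z)) * fst (phi z)) F (locally ((fst sB ^2 - snd sB ^2) * snd phiB + (2 * fst sB * snd sB) * fst phiB))).
    { lim. all: try exact FF. }
    assert (Lg : filterlim (fun z => PI/4 * exp (2*PI*snd z) * cos (2*PI*fst z)) F (locally (PI/4 * exp (2*PI*y) * cos (2*PI*x0)))).
    { unfold Rdiv. lim. all: try exact FF. }
    exact (@Leq C F FF (fun z => (fst (s z) ^2 - snd (s z) ^2) * snd (phi z) + (2 * fst (s z) * snd (s z)) * fst (phi z)) (fun z => PI/4 * exp (2*PI*snd z) * cos (2*PI*fst z)) _ _ HP Ev Lf Lg). }
Qed.

Lemma alg (u v p q c1 c4 : R) : u^2 - v^2 = c1 -> c1 > 0 -> 2*u*v = 0 ->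
  (p^2-q^2)*u - (2*p*q)*v = 0 -> (p^2-q^2)*v + (2*p*q)*u = c4 -> c4 <> 0 ->
  v = 0 /\ u <> 0 /\ p^2 = q^2 /\ c4 * u = 2*p*q*u^2.
Proof.
  intros H1 H2 H3 H4 H5 H6.
  assert (Hu : u <> 0) by (intro; subst; nra).
  assert (Hv : v = 0) by (apply (Rmult_eq_reg_l (2*u)); [lra| apply Rmult_integral_contrapositive_currified; lra]).
  subst v. split; [reflexivity|split; [exact Hu|split]].
  - assert ((p^2 - q^2) = 0) by (apply (Rmult_eq_reg_r u); [lra|exact Hu]). lra.
  - rewrite <- H5. ring.
Qed.

Lemma alg_pos (u v p q c1 c4 : R) : u^2 - v^2 = c1 -> c1 > 0 -> 2*u*v = 0 ->
  (p^2-q^2)*u - (2*p*q)*v = 0 -> (p^2-q^2)*v + (2*p*q)*u = c4 -> c4 <> 0 -> c4 * u >= 0 ->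
  v = 0 /\ p = q.
Proof.
  intros H1 H2 H3 H4 H5 H6 H7. destruct (alg u v p q c1 c4 H1 H2 H3 H4 H5 H6) as [Hv [Hu [Hpq Hc]]].
  split; [exact Hv|].
  assert (c4 * u <> 0) by (apply Rmult_integral_contrapositive_currified; assumption).
  assert (Hu2 : u^2 > 0) by nra.
  assert (p*q > 0) by nra.
  assert ((p - q) * (p + q) = 0) by nra.
  destruct (Rmult_integral _ _ H8); nra.
Qed.

Lemma alg_neg (u v p q c1 c4 : R) : u^2 - v^2 = c1 -> c1 > 0 -> 2*u*v = 0 ->
  (p^2-q^2)*u - (2*p*q)*v = 0 -> (p^2-q^2)*v + (2*p*q)*u = c4 -> c4 <> 0 -> c4 * u <= 0 ->
  v = 0 /\ p = - q.
Proof.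
  intros H1 H2 H3 H4 H5 H6 H7. destruct (alg u v p q c1 c4 H1 H2 H3 H4 H5 H6) as [Hv [Hu [Hpq Hc]]].
  split; [exact Hv|].
  assert (c4 * u <> 0) by (apply Rmult_integral_contrapositive_currified; assumption).
  assert (Hu2 : u^2 > 0) by nra.
  assert (p*q < 0) by nra.
  assert ((p - q) * (p + q) = 0) by nra.
  destruct (Rmult_integral _ _ H8); nra.
Qed.

Lemma bp (dphi s : C -> C) (D : C -> Prop) x0 y (sB phiB : C) (pos : bool) :
  sqrt_dphi_branch dphi s ->
  ProperFilter' (within D (locally ((x0,y):C))) ->
  (forall z, D z -> S_slit z) ->
  filterlim s (within D (locally ((x0,y):C))) (locally sB) ->
  filterlim phi (within D (locally ((x0,y):C))) (locally phiB) ->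
  sin (2*PI*x0) = 0 -> 1 - E1 x0 y > 0 -> cos (2*PI*x0) <> 0 ->
  within D (locally ((x0,y):C)) (fun z => if pos then PI/4*exp(2*PI*y)*cos(2*PI*x0) * fst (phi z) >= 0
                                           else PI/4*exp(2*PI*y)*cos(2*PI*x0) * fst (phi z) <= 0) ->
  snd phiB = 0 /\ fst sB = (if pos then snd sB else - snd sB).
Proof.
  intros Hb HP HD Hs Hphi Hsin HE1 Hcos Hev.
  destruct (core dphi s D x0 y sB phiB Hb HP HD Hs Hphi) as [H1 [H2 [H3 H4]]].
  set (F := within D (locally ((x0,y):C))) in *.
  assert (FF : Filter F) by (apply within_filter; apply locally_filter).
  pose proof (Lfst F _ _ Hphi) as Hp1.
  set (c4 := PI/4*exp(2*PI*y)*cos(2*PI*x0)) in *.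
  assert (Hc4 : c4 <> 0).
  { unfold c4. pose proof PI_RGT_0. pose proof (exp_pos (2*PI*y)).
    assert (PI/4*exp(2*PI*y) > 0) by (apply Rmult_lt_0_compat; lra). apply Rmult_integral_contrapositive_currified; lra. }
  assert (HE2 : E2 x0 y = 0) by (unfold E2; rewrite Hsin; ring).
  rewrite HE2 in H2. rewrite Hsin, Rmult_0_r in H3.
  assert (Hl : filterlim (fun z => c4 * fst (phi z)) F (locally (c4 * fst phiB))).
  { apply LM; [exact FF| exact (LK F _) | exact Hp1]. }
  destruct pos.
  - assert (Hs0 : c4 * fst phiB >= 0).
    { apply Rle_ge. apply (@Lge C F FF (fun z => c4 * fst (phi z)) _ 0 HP); [|exact Hl].
      apply (filter_imp _ _ (fun z H => Rge_le _ _ H) Hev). }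
    apply (alg_pos (fst phiB) (snd phiB) (fst sB) (snd sB) ((1 - E1 x0 y)/4) c4); auto; try lra.
  - assert (Hs0 : c4 * fst phiB <= 0).
    { apply (@Lle C F FF (fun z => c4 * fst (phi z)) _ 0 HP); [exact Hev|exact Hl]. }
    apply (alg_neg (fst phiB) (snd phiB) (fst sB) (snd sB) ((1 - E1 x0 y)/4) c4); auto; try lra.
Qed.

Lemma proper_side (D : C -> Prop) x0 y (sg : R) :
  (sg = 1 \/ sg = -1) -> (forall d, 0 < d <= 1/4 -> D (x0 + sg * d, y)) ->
  ProperFilter' (within D (locally ((x0,y):C))).
Proof.
  intros Hsg Hd. constructor; [| apply within_filter; apply locally_filter].
  intros [e He].
  set (d := Rmin (e/2) (1/4)).
  assert (Hd0 : 0 < d <= 1/4) by (unfold d; split; [apply Rmin_glb_lt; pose proof (cond_pos e); lra | apply Rmin_r]).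
  assert (Hde : d < e) by (unfold d; pose proof (Rmin_l (e/2) (1/4)); pose proof (cond_pos e); lra).
  apply (He (x0 + sg * d, y)); [| apply Hd; exact Hd0].
  split; unfold ball; simpl; unfold AbsRing_ball, abs, minus, plus, opp; simpl.
  - replace (x0 + sg * d + - x0) with (sg * d) by ring. 
    destruct Hsg as [-> | ->]; [rewrite Rabs_right by lra | rewrite Rabs_left by lra]; lra.
  - replace (y + - y) with 0 by ring. rewrite Rabs_R0. apply cond_pos.
Qed.

Lemma ev_near (D : C -> Prop) x0 y (Q : C -> Prop) :
  (forall z, D z -> Rabs (fst z - x0) < 1/2 -> Q z) -> within D (locally ((x0,y):C)) Q.
Proof.
  intros H. exists (mkposreal (1/2) ltac:(lra)). intros z [Hb1 _] Hz. apply H; auto.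
Qed.

Lemma re_phi_neg z : -1/2 < fst z < 0 -> fst (phi z) <= 0.
Proof.
  destruct z as [a b]; simpl; intros Ha. apply phi_re_sign. unfold E2.
  pose proof PI_RGT_0. pose proof (exp_pos (2*PI*b)).
  assert (sin (2*PI*a) < 0) by (apply sin_lt_0_var; nra). nra.
Qed.
Lemma re_phi_pos z : 0 < fst z < 1/2 -> 0 <= fst (phi z).
Proof.
  destruct z as [a b]; simpl; intros Ha. apply phi_re_sign. unfold E2.
  pose proof PI_RGT_0. pose proof (exp_pos (2*PI*b)).
  assert (0 < sin (2*PI*a)) by (apply sin_gt_0; nra). nra.
Qed.

Lemma integrand_zero a1 p1 a2 p2 : snd a1 = 0 -> snd p1 = 0 ->
  integrand1 a1 p1 a2 p2 = RtoC 0 /\ integrand2 a1 p1 a2 p2 = RtoC 0.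
Proof.
  destruct a1 as [a b], p1 as [c d]; simpl; intros -> ->.
  assert (Ha : Cconj (a,0) = (a,0)) by (unfold Cconj; simpl; f_equal; ring).
  assert (Hc : Cconj (c,0) = (c,0)) by (unfold Cconj; simpl; f_equal; ring).
  unfold integrand1, integrand2, Koo, Kbo, Kob, Kbb. rewrite Ha, Hc.
  split; [generalize (Cdiv (Cmult (a, 0) a2) (Cminus (c, 0) p2)) | generalize (Cdiv (Cmult (a, 0) (Cconj a2)) (Cminus (c, 0) (Cconj p2)))];
  intros [u v]; unfold Cplus, Cmult, Copp, Ci, RtoC; simpl; f_equal; ring.
Qed.

Lemma a1_real_left k s : on_line (- PI / 4) k -> fst s = snd s -> snd (Cmult k s) = 0.
Proof.
  intros [t ->] Hs. destruct s as [p q]. simpl in Hs. subst q.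
  unfold cexp, Cmult, RtoC, Re, Im; simpl.
  replace (- PI / 4) with (- (PI/4)) by field. rewrite cos_neg, sin_neg, sin_PI4, cos_PI4. ring.
Qed.
Lemma a1_real_right k s : on_line (PI / 4) k -> fst s = - snd s -> snd (Cmult k s) = 0.
Proof.
  intros [t ->] Hs. destruct s as [p q]. simpl in Hs. subst p.
  unfold cexp, Cmult, RtoC, Re, Im; simpl.
  rewrite sin_PI4, cos_PI4. ring.
Qed.

Lemma int0 (f : R -> C) a b : (forall y, Rmin a b < y < Rmax a b -> f y = RtoC 0) ->
  @is_RInt C_R_CompleteNormedModule f a b (RtoC 0).
Proof.
  intros H. apply (is_RInt_ext (fun _ => RtoC 0)).
  - intros y Hy. symmetry. apply H. exact Hy.
  - pose proof (@is_RInt_const C_R_CompleteNormedModule a b (RtoC 0)) as H0.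
    match type of H0 with is_RInt _ _ _ ?L =>
      assert (E : L = RtoC 0) by (apply injective_projections; simpl; unfold scal; simpl; unfold mult; simpl; ring); rewrite E in H0; exact H0 end.
Qed.

Lemma abs_half x x0 : Rabs (x - x0) < 1/2 -> x0 - 1/2 < x < x0 + 1/2.
Proof. intros H. apply Rabs_def2 in H. lra. Qed.

Lemma case_lm dphi s y sB phiB : sqrt_dphi_branch dphi s ->
  filterlim s (within (side_left (-1/2)) (locally ((-1/2,y):C))) (locally sB) ->
  filterlim phi (within (side_left (-1/2)) (locally ((-1/2,y):C))) (locally phiB) ->
  snd phiB = 0 /\ fst sB = snd sB.
Proof.
  intros Hb Hs Hp.
  pose proof PI_RGT_0. pose proof (exp_pos (2*PI*y)).
  assert (Ec : 2*PI*(-1/2) = - PI) by field.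
  apply (bp dphi s (side_left (-1/2)) (-1/2) y sB phiB true Hb); auto.
  - apply (proper_side _ _ _ 1); [left; reflexivity|]. intros d Hd.
    unfold side_left, S_slit, Re; simpl. lra.
  - intros z [Hz _]; exact Hz.
  - rewrite Ec, sin_neg, sin_PI; ring.
  - unfold E1. rewrite Ec, cos_neg, cos_PI. lra.
  - rewrite Ec, cos_neg, cos_PI. lra.
  - apply ev_near. intros z [_ Hz] Hn. apply abs_half in Hn. unfold Re in Hz.
    assert (fst (phi z) <= 0) by (apply re_phi_neg; lra).
    rewrite Ec, cos_neg, cos_PI.
    assert (PI/4*exp(2*PI*y) > 0) by (apply Rmult_lt_0_compat; lra). nra.
Qed.

Lemma case_l0 dphi s y sB phiB : sqrt_dphi_branch dphi s -> y < 0 ->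
  filterlim s (within (side_left 0) (locally ((0,y):C))) (locally sB) ->
  filterlim phi (within (side_left 0) (locally ((0,y):C))) (locally phiB) ->
  snd phiB = 0 /\ fst sB = snd sB.
Proof.
  intros Hb Hy Hs Hp.
  pose proof PI_RGT_0. pose proof (exp_pos (2*PI*y)).
  assert (Ec : 2*PI*0 = 0) by ring.
  apply (bp dphi s (side_left 0) 0 y sB phiB true Hb); auto.
  - apply (proper_side _ _ _ 1); [left; reflexivity|]. intros d Hd.
    unfold side_left, S_slit, Re; simpl. lra.
  - intros z [Hz _]; exact Hz.
  - rewrite Ec, sin_0; ring.
  - unfold E1. rewrite Ec, cos_0.
    assert (exp (2*PI*y) < exp 0) by (apply exp_increasing; nra). rewrite exp_0 in H1. lra.
  - rewrite Ec, cos_0. lra.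
  - apply ev_near. intros z [Hz1 Hz] Hn. apply abs_half in Hn. unfold Re in Hz.
    destruct Hz1 as [Hz1 _]. unfold Re in Hz1.
    assert (0 <= fst (phi z)) by (apply re_phi_pos; lra).
    rewrite Ec, cos_0.
    assert (PI/4*exp(2*PI*y) > 0) by (apply Rmult_lt_0_compat; lra). nra.
Qed.

Lemma case_rp dphi s y sB phiB : sqrt_dphi_branch dphi s ->
  filterlim s (within (side_right (1/2)) (locally ((1/2,y):C))) (locally sB) ->
  filterlim phi (within (side_right (1/2)) (locally ((1/2,y):C))) (locally phiB) ->
  snd phiB = 0 /\ fst sB = - snd sB.
Proof.
  intros Hb Hs Hp.
  pose proof PI_RGT_0. pose proof (exp_pos (2*PI*y)).
  assert (Ec : 2*PI*(1/2) = PI) by field.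
  apply (bp dphi s (side_right (1/2)) (1/2) y sB phiB false Hb); auto.
  - apply (proper_side _ _ _ (-1)); [right; reflexivity|]. intros d Hd.
    unfold side_right, S_slit, Re; simpl. lra.
  - intros z [Hz _]; exact Hz.
  - rewrite Ec, sin_PI; ring.
  - unfold E1. rewrite Ec, cos_PI. lra.
  - rewrite Ec, cos_PI. lra.
  - apply ev_near. intros z [_ Hz] Hn. apply abs_half in Hn. unfold Re in Hz.
    assert (0 <= fst (phi z)) by (apply re_phi_pos; lra).
    rewrite Ec, cos_PI.
    assert (PI/4*exp(2*PI*y) > 0) by (apply Rmult_lt_0_compat; lra). nra.
Qed.

Lemma case_r0 dphi s y sB phiB : sqrt_dphi_branch dphi s -> y < 0 ->
  filterlim s (within (side_right 0) (locally ((0,y):C))) (locally sB) ->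
  filterlim phi (within (side_right 0) (locally ((0,y):C))) (locally phiB) ->
  snd phiB = 0 /\ fst sB = - snd sB.
Proof.
  intros Hb Hy Hs Hp.
  pose proof PI_RGT_0. pose proof (exp_pos (2*PI*y)).
  assert (Ec : 2*PI*0 = 0) by ring.
  apply (bp dphi s (side_right 0) 0 y sB phiB false Hb); auto.
  - apply (proper_side _ _ _ (-1)); [right; reflexivity|]. intros d Hd.
    unfold side_right, S_slit, Re; simpl. lra.
  - intros z [Hz _]; exact Hz.
  - rewrite Ec, sin_0; ring.
  - unfold E1. rewrite Ec, cos_0.
    assert (exp (2*PI*y) < exp 0) by (apply exp_increasing; nra). rewrite exp_0 in H1. lra.
  - rewrite Ec, cos_0. lra.
  - apply ev_near. intros z [Hz1 Hz] Hn. apply abs_half in Hn. unfold Re in Hz.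
    destruct Hz1 as [Hz1 _]. unfold Re in Hz1.
    assert (fst (phi z) <= 0) by (apply re_phi_neg; lra).
    rewrite Ec, cos_0.
    assert (PI/4*exp(2*PI*y) > 0) by (apply Rmult_lt_0_compat; lra). nra.
Qed.

Theorem lemma7p2 :
  forall (dphi s : C -> C), sqrt_dphi_branch dphi s ->
  forall (K1 K2 : C -> C) (z2 : C), S_slit z2 ->
  (* (a) left boundary *)
  (forall (x0 a b : R) (K1B sB phiB : R -> C),
     left_boundary_seg x0 a b ->
     cont_ext (side_left x0) K1 K1B x0 a b ->
     cont_ext (side_left x0) s sB x0 a b ->
     cont_ext (side_left x0) phi phiB x0 a b ->
     (forall y, in_seg a b y -> on_line (- PI / 4) (K1B y)) ->
     @is_RInt C_R_CompleteNormedModule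
       (fun y => integrand1 (Cmult (K1B y) (sB y)) (phiB y)
                            (Cmult (K2 z2) (s z2)) (phi z2)) a b (RtoC 0) /\
     @is_RInt C_R_CompleteNormedModule
       (fun y => integrand2 (Cmult (K1B y) (sB y)) (phiB y)
                            (Cmult (K2 z2) (s z2)) (phi z2)) a b (RtoC 0)) /\
  (* (b) right boundary *)
  (forall (x0 a b : R) (K1B sB phiB : R -> C),
     right_boundary_seg x0 a b ->
     cont_ext (side_right x0) K1 K1B x0 a b ->
     cont_ext (side_right x0) s sB x0 a b ->
     cont_ext (side_right x0) phi phiB x0 a b ->
     (forall y, in_seg a b y -> on_line (PI / 4) (K1B y)) ->
     @is_RInt C_R_CompleteNormedModule
       (fun y => integrand1 (Cmult (K1B y) (sB y)) (phiB y)
                            (Cmult (K2 z2) (s z2)) (phi z2)) a b (RtoC 0) /\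
     @is_RInt C_R_CompleteNormedModule
       (fun y => integrand2 (Cmult (K1B y) (sB y)) (phiB y)
                            (Cmult (K2 z2) (s z2)) (phi z2)) a b (RtoC 0)).
Proof.
  intros dphi s Hb K1 K2 z2 Hz2. split.
  - intros x0 a b K1B sB phiB Hseg HK Hs Hp Hline.
    assert (Hpt : forall y, Rmin a b < y < Rmax a b ->
              snd (Cmult (K1B y) (sB y)) = 0 /\ snd (phiB y) = 0).
    { intros y Hy. assert (Hin : in_seg a b y) by (unfold in_seg; lra).
      destruct (Hs y Hin) as [Hs1 _]. destruct (Hp y Hin) as [Hp1 _].
      assert (Hq : snd (phiB y) = 0 /\ fst (sB y) = snd (sB y)).
      { destruct Hseg as [-> | [-> [Ha Hb']]].
        + exact (case_lm dphi s y _ _ Hb Hs1 Hp1).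
        + assert (y < 0) by (pose proof (Rmax_lub_lt a b 0 Ha Hb'); lra).
          exact (case_l0 dphi s y _ _ Hb H Hs1 Hp1). }
      split; [apply a1_real_left; [apply Hline; exact Hin | tauto] | tauto]. }
    split; apply int0; intros y Hy; destruct (Hpt y Hy); apply integrand_zero; auto.
  - intros x0 a b K1B sB phiB Hseg HK Hs Hp Hline.
    assert (Hpt : forall y, Rmin a b < y < Rmax a b ->
              snd (Cmult (K1B y) (sB y)) = 0 /\ snd (phiB y) = 0).
    { intros y Hy. assert (Hin : in_seg a b y) by (unfold in_seg; lra).
      destruct (Hs y Hin) as [Hs1 _]. destruct (Hp y Hin) as [Hp1 _].
      assert (Hq : snd (phiB y) = 0 /\ fst (sB y) = - snd (sB y)).
      { destruct Hseg as [-> | [-> [Ha Hb']]].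
        + exact (case_rp dphi s y _ _ Hb Hs1 Hp1).
        + assert (y < 0) by (pose proof (Rmax_lub_lt a b 0 Ha Hb'); lra).
          exact (case_r0 dphi s y _ _ Hb H Hs1 Hp1). }
      split; [apply a1_real_right; [apply Hline; exact Hin | tauto] | tauto]. }
    split; apply int0; intros y Hy; destruct (Hpt y Hy); apply integrand_zero; auto.
Qed.
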